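(* Let $d\in\mathbb{N}$, $\mathscr{a}\in\mathbb{R}$, $\mathscr{b}\in(\mathscr{a},\infty)$, for $u=(u_1,\dots,u_{d+1})\in\mathbb{R}^{d+1}$ let $I^u=\{x=(x_1,\dots,x_d)\in[\mathscr{a},\mathscr{b}]^d\colon u_{d+1}+\sum_{i=1}^d u_ix_i>0\}$, let $\lambda_d$ be the Lebesgue–Borel measure on $\mathbb{R}^d$, and let $v\in\mathbb{R}^{d+1}\setminus\{0\}$. Then $\limsup_{\mathbb{R}^{d+1}\ni u\to v}\lambda_d(I^u\,\Delta\, I^v)=0$.
   Context: $A\,\Delta\,B$ denotes the symmetric difference of sets $A$ and $B$. *)

(* Defs.v *)
From HB Require Import structures.
From mathcomp Require Import all_boot all_order all_algebra.
From mathcomp Require Import all_classical all_reals all_analysis.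
Set Implicit Arguments. Unset Strict Implicit. Unset Printing Implicit Defensive.
Import Order.TTheory GRing.Theory Num.Theory.
Import numFieldNormedType.Exports.
Local Open Scope classical_set_scope.
Local Open Scope ring_scope.

(* d-dimensional Lebesgue(-Borel) measure on R^d = d.-tuple R, given as the
   iterated (Tonelli) integral of the indicator function w.r.t. the
   one-dimensional Lebesgue measure [lebesgue_measure] of mathcomp-analysis.
   iter_int 0 f = f [tuple];
   iter_int n.+1 f = \int_x iter_int n (fun t => f (x :: t)) dx. *)
Fixpoint iter_int (R : realType) (n : nat) : (n.-tuple R -> \bar R) -> \bar R :=
  match n return (n.-tuple R -> \bar R) -> \bar R with
  | 0 => fun f => f [tuple]
  | n'.+1 => fun f =>
      (\int[@lebesgue_measure R]_(x in [set: R])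
          @iter_int R n' (fun t => f [tuple of (x : R) :: t]))%E
  end.

Definition lebesgue_d (R : realType) (d : nat) (A : set (d.-tuple R)) : \bar R :=
  iter_int (fun x => (\1_A x)%:E).

(* I^u = { x in [a,b]^d : u_{d+1} + sum_{i=1}^d u_i x_i > 0 },
   with u = (u_1,...,u_{d+1}) a row vector of length d+1
   (u_i = u 0 (i-1), u_{d+1} = u 0 ord_max). *)
Definition Iset (R : realType) (d : nat) (a b : R) (u : 'rV[R]_(d.+1))
  : set (d.-tuple R) :=
  [set x | (forall i : 'I_d, a <= tnth x i <= b) /\
           0 < u 0 ord_max + \sum_(i < d) u 0 (widen_ord (leqnSn d) i) * tnth x i].

(* Main.v *)
Require Import Defs.
From HB Require Import structures.
From mathcomp Require Import all_boot all_order all_algebra.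
From mathcomp Require Import all_classical all_reals all_analysis.
From mathcomp Require Import ring lra.
Import Order.TTheory GRing.Theory Num.Theory.
Import numFieldNormedType.Exports.
Local Open Scope classical_set_scope.
Local Open Scope ring_scope.
Section Helpers.
Variable R : realType.
Local Open Scope ereal_scope.

Lemma int_le (f g : R -> \bar R) : (forall x, 0 <= f x) -> (forall x, f x <= g x) ->
  \int[@lebesgue_measure R]_(x in [set: R]) f x <= \int[@lebesgue_measure R]_(x in [set: R]) g x.
Proof.
move=> f0 fg.
have g0 : forall x, 0 <= g x by move=> x; exact: le_trans (f0 x) (fg x).
rewrite !ge0_integralTE//.
apply: le_ereal_sup => _ [h /= hf <-]; exists h => //= x.
exact: le_trans (hf x) (fg x).
Qed.

Lemma int_cst_itv (K p q : R) : (0 <= K)%R -> (p <= q)%R ->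
  \int[@lebesgue_measure R]_(x in [set: R]) (K * \1_(`[p, q]%classic) x)%:E = (K * (q - p))%:E.
Proof.
move=> K0 pq.
have := @integralZl_indic _ _ _ (@lebesgue_measure R) setT measurableT (fun=> `[p, q]%classic) K.
move=> ->; last 2 first.
- by move=> /lt_geF; rewrite K0.
- exact: measurable_itv.
rewrite integral_indic; last exact: measurable_itv.
rewrite setIT. change (K%:E * (@lebesgue_measure R `[p, q]%classic) = (K * (q - p))%:E). rewrite lebesgue_measure_itv /=.
move: pq; rewrite le_eqVlt => /orP[/eqP->|pq]; rewrite lte_fin ?ltxx ?pq /=.
  by rewrite subrr mulr0 mule0.
  by rewrite EFinM EFinB.
exact: measurableT.
Qed.
End Helpers.

Section Iter.
Variable R : realType.
Local Open Scope ereal_scope.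

Lemma iter_ge0 n (f : n.-tuple R -> \bar R) : (forall x, 0 <= f x) -> 0 <= iter_int f.
Proof.
elim: n f => [|n IH] f f0 /=; first exact: f0.
by apply: integral_ge0 => x _; apply: IH => t.
Qed.

Lemma iter_le n (f g : n.-tuple R -> \bar R) : (forall x, 0 <= f x) ->
  (forall x, f x <= g x) -> iter_int f <= iter_int g.
Proof.
elim: n f g => [|n IH] f g f0 fg /=; first exact: fg.
apply: int_le => x; first by apply: iter_ge0.
by apply: IH.
Qed.

Lemma iter_zero n (f : n.-tuple R -> \bar R) : (forall x, f x = 0) -> iter_int f = 0.
Proof.
elim: n f => [|n IH] f f0 /=; first exact: f0.
by apply: integral0_eq => x _; apply: IH.
Qed.

Lemma iter_step n (f : n.+1.-tuple R -> \bar R) (K p q : R) :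
  (0 <= K)%R -> (p <= q)%R -> (forall x, 0 <= f x) ->
  (forall x0, ((p <= x0 <= q)%R /\ iter_int (fun t : n.-tuple R => f [tuple of x0 :: t]) <= K%:E)
      \/ (forall t : n.-tuple R, f [tuple of x0 :: t] = 0)) ->
  iter_int f <= (K * (q - p))%:E.
Proof.
move=> K0 pq f0 H /=.
rewrite -int_cst_itv //.
apply: int_le => x0; first by apply: iter_ge0.
case: (H x0) => [[xpq Hle]|Hz].
  rewrite indicE mem_set ?mulr1 //=.
rewrite (@iter_zero n (fun t : n.-tuple R => f [tuple of x0 :: t]) Hz).
by rewrite lee_fin mulr_ge0 // ?indicE.
Qed.
End Iter.

Section Slab.
Variable R : realType.
Variables a b : R.
Hypothesis ab : a <= b.

Definition box {n} (x : n.-tuple R) := forall i : 'I_n, a <= tnth x i <= b.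
Definition slab {n} (c : R) (w : 'I_n -> R) (eta : R) :=
  [set x : n.-tuple R | box x /\ `|c + \sum_(j < n) w j * tnth x j| <= eta].

Lemma box_cons n x0 (t : n.-tuple R) : box [tuple of x0 :: t] <-> (a <= x0 <= b) /\ box t.
Proof.
split.
  move=> H; split; first by have := H ord0; rewrite tnth0.
  by move=> j; have := H (lift ord0 j); rewrite tnthS.
move=> [h0 ht] i; case: (unliftP ord0 i) => [j ->|->].
  by rewrite tnthS.
by rewrite tnth0.
Qed.

Lemma sum_cons n (w : 'I_n.+1 -> R) x0 (t : n.-tuple R) :
  \sum_(j < n.+1) w j * tnth [tuple of x0 :: t] j =
  w ord0 * x0 + \sum_(j < n) w (lift ord0 j) * tnth t j.
Proof.
rewrite big_ord_recl tnth0; congr (_ + _).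
by apply: eq_bigr => j _; rewrite tnthS.
Qed.

Lemma slab_cons n c (w : 'I_n.+1 -> R) eta x0 (t : n.-tuple R) :
  slab c w eta [tuple of x0 :: t] <->
  (a <= x0 <= b) /\ slab (c + w ord0 * x0) (fun j => w (lift ord0 j)) eta t.
Proof.
rewrite /slab /= sum_cons addrA; split.
  by move=> [/box_cons [h1 h2] h3].
by move=> [h1 [h2 h3]]; split => //; apply/box_cons.
Qed.

Let M := b - a + 1.
Let M0 : 0 <= M. Proof. by rewrite /M addr_ge0 // subr_ge0. Qed.
Let M1 : b - a <= M. Proof. by rewrite /M lerDl. Qed.
Let M_ge1 : 1 <= M. Proof. by rewrite /M lerDr subr_ge0. Qed.

Local Open Scope ereal_scope.

Lemma box_bound n : iter_int (fun x : n.-tuple R => (\1_[set x | box x] x)%:E) <= (M ^+ n)%:E.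
Proof.
elim: n => [|n IH].
  by rewrite /= expr0 lee_fin indicE; case: (_ \in _).
apply: le_trans (@iter_step R n _ (M ^+ n) a b _ _ _ _) _.
- exact: exprn_ge0.
- exact: ab.
- by move=> x; rewrite lee_fin indicE.
- move=> x0.
  have [hx|hx] := boolP (a <= x0 <= b)%R.
    left; split => //; apply: le_trans IH; apply: iter_le => t.
      by rewrite lee_fin indicE.
    rewrite lee_fin !indicE; case: (boolP (_ \in [set x | box x])) => //.
    rewrite inE => /box_cons [_ h]; rewrite mem_set //.
  right=> t; rewrite indicE memNset //= => /box_cons [h _].
  by rewrite h in hx.
rewrite lee_fin exprS mulrC; apply: ler_wpM2r => //; exact: exprn_ge0.
Qed.

Lemma slab_bound n : forall (c : R) (w : 'I_n -> R) (eta : R) (i : 'I_n), (0 <= eta)%R -> (w i != 0)%R ->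
  (forall j : 'I_n, (i < j)%N -> w j = 0%R) ->
  iter_int (fun x : n.-tuple R => (\1_(slab c w eta) x)%:E) <= (M ^+ n * (2 * (eta / `|w i|)))%:E.
Proof.
elim: n => [|n IH] c w eta i eta0 wi wz; first by have := ltn_ord i; rewrite ltn0.
have e0 : forall j, (0 <= eta / `|w j|)%R by move=> j; rewrite divr_ge0.
move: wi wz; case: (unliftP ord0 i) => [i' ->|->] wi wz.
  apply: le_trans (@iter_step R n _ (M ^+ n * (2 * (eta / `|w (lift ord0 i')|))) a b _ _ _ _) _.
  - by rewrite mulr_ge0 ?exprn_ge0 ?mulr_ge0.
  - exact: ab.
  - by move=> x; rewrite lee_fin indicE.
  - move=> x0; have [hx|hx] := boolP (a <= x0 <= b)%R.
      left; split => //.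
      have := IH (c + w ord0 * x0)%R (fun j => w (lift ord0 j)) eta i' eta0 wi.
      have H2 : forall j : 'I_n, (i' < j)%N -> w (lift ord0 j) = 0%R.
        by move=> j ij; apply: wz; rewrite /= /bump /= !add1n ltnS.
      move=> /(_ H2) H; apply: le_trans H.
        apply: iter_le => t; first by rewrite lee_fin indicE.
        rewrite lee_fin !indicE; case: (boolP (_ \in slab _ _ _)) => //.
        by rewrite inE => /slab_cons [_ h]; rewrite mem_set.
    right=> t; rewrite indicE memNset //= => /slab_cons [h _].
    by rewrite h in hx.
  rewrite lee_fin exprS -[leRHS]mulrA [leRHS]mulrC; apply: ler_wpM2l => //.
  by rewrite mulr_ge0 ?exprn_ge0 ?mulr_ge0.
set e := (eta / `|w ord0|)%R.
have w0 : (w ord0 != 0)%R by [].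
have ee : (e * `|w ord0| = eta)%R by rewrite /e mulrVK // unitfE normr_eq0.
have e0' : (0 <= e)%R by apply: e0.
apply: le_trans (@iter_step R n _ (M ^+ n) (- c / w ord0 - e) (- c / w ord0 + e) _ _ _ _) _.
- exact: exprn_ge0.
- by lra.
- by move=> x; rewrite lee_fin indicE.
- move=> x0.
  have [hx|hx] := boolP ((a <= x0 <= b) && (`|c + w ord0 * x0| <= eta))%R.
    left; split.
      move/andP: hx => [_ hx].
      have : (`|x0 + c / w ord0| <= e)%R.
        have wpos : (0 < `|w ord0|)%R by rewrite normr_gt0.
        rewrite -(ler_pM2r wpos) ee -normrM mulrDl divfK //.
        by rewrite addrC mulrC.
      by rewrite ler_norml; move=> /andP [h1 h2]; apply/andP; split; lra.
    apply: le_trans (box_bound n); apply: iter_le => t; first by rewrite lee_fin indicE.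
    rewrite lee_fin !indicE; case: (boolP (_ \in slab _ _ _)) => //.
    by rewrite inE => /slab_cons [_ [h _]]; rewrite mem_set.
  right=> t; rewrite indicE memNset //= => /slab_cons [h1 [_ h2]].
  move: hx; rewrite h1 /=; move: h2.
  rewrite big1 ?addr0 => [->//|j _]; by rewrite wz ?mul0r.
rewrite lee_fin (_ : (- c / w ord0 + e - (- c / w ord0 - e)) = 2 * e)%R; last by lra.
rewrite exprS; apply: ler_wpM2r; first by lra.
rewrite -[X in (X <= _)%R]mul1r; apply: ler_wpM2r; first exact: exprn_ge0.
exact: M_ge1.
Qed.
End Slab.
Arguments slab {R} a b {n}.
Arguments box {R} a b {n}.

Section Main.
Variable R : realType.
Variables (d : nat) (a b : R).

Let C := 1 + d%:R * (`|a| + `|b|).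

Lemma C_gt0 : 0 < C.
Proof. by rewrite /C ltr_wpDr ?ltr01 // mulr_ge0 // addr_ge0. Qed.

Lemma diff_in_slab (u v : 'rV[R]_d.+1) (δ : R) (x : d.-tuple R) :
  ball v δ u -> (Iset a b u `+` Iset a b v) x ->
  slab a b (v 0 ord_max) (fun j => v 0 (widen_ord (leqnSn d) j)) (δ * C) x.
Proof.
move=> [d0 Hb].
set Lu := u 0 ord_max + \sum_(i < d) u 0 (widen_ord (leqnSn d) i) * tnth x i.
set Lv := v 0 ord_max + \sum_(i < d) v 0 (widen_ord (leqnSn d) i) * tnth x i.
have key : forall (bx : box a b x), `|Lu - Lv| <= δ * C.
  move=> bx.
  have -> : Lu - Lv = (u 0 ord_max - v 0 ord_max) +
     \sum_(i < d) (u 0 (widen_ord (leqnSn d) i) - v 0 (widen_ord (leqnSn d) i)) * tnth x i.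
    rewrite /Lu /Lv opprD addrACA; congr (_ + _).
    by rewrite -sumrN -big_split /=; apply: eq_bigr => i _; rewrite mulrBl.
  apply: le_trans (ler_normD _ _) _.
  rewrite /C mulrDr mulr1; apply: lerD.
    by rewrite distrC; apply/ltW/Hb.
  apply: le_trans (ler_norm_sum _ _ _) _.
  have -> : δ * (d%:R * (`|a| + `|b|)) = \sum_(i < d) δ * (`|a| + `|b|).
    by rewrite sumr_const card_ord -[RHS]mulr_natl mulrCA.
  apply: ler_sum => i _; rewrite normrM; apply: ler_pM => //.
    by rewrite distrC; apply/ltW/Hb.
  have /andP[h1 h2] := bx i.
  have h3 := ler_norm a; have h4 := ler_norm b; have h5 := ler_norm (-a).
  have h6 := normr_ge0 a; have h7 := normr_ge0 b.
  rewrite normrN in h5.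
  by rewrite ler_norml; apply/andP; split; lra.
rewrite /setY /= => -[[[bx hu] hv]|[[bx hv] hu]]; split => //;
  have := key bx; rewrite ler_norml => /andP[k1 k2]; rewrite ler_norml -/Lv.
  have dC : 0 <= δ * C by rewrite mulr_ge0 ?ltW ?C_gt0.
- have hv' : Lv <= 0 by rewrite leNgt; apply/negP => h; apply: hv; split.
  by rewrite -/Lu in hu; apply/andP; split; lra.
- have hu' : Lu <= 0 by rewrite leNgt; apply/negP => h; apply: hu; split.
  by rewrite -/Lv in hv; apply/andP; split; lra.
Qed.
End Main.

Theorem lemma2p5 (R : realType) (d : nat) (a b : R) (v : 'rV[R]_(d.+1)) :
  a < b -> v != 0 ->
  limf_esup (fun u : 'rV[R]_(d.+1) =>
               lebesgue_d (Iset a b u `+` Iset a b v)) v^' = 0%E.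
Proof.
move=> ab v0.
have f0 : forall u, (0 <= lebesgue_d (Iset a b u `+` Iset a b v))%E.
  by move=> u; apply: iter_ge0 => x; rewrite lee_fin indicE.
apply/eqP; rewrite eq_le; apply/andP; split; last first.
  apply: limf_esup_ge0 => //.
  move=> /nbhs_ballP [e /= e0 He].
  pose u := v + const_mx (e / 2).
  have Bu : ball v e u.
    split => // i j; rewrite /ball /= !mxE opprD addrA subrr sub0r normrN.
    by rewrite gtr0_norm ?divr_gt0 //; lra.
  apply: (He u Bu); apply/eqP => /(congr1 (fun m : 'rV[R]_(d.+1) => m 0 0)); rewrite !mxE.
  by move=> h; lra.
apply/lee_addgt0Pr => eps eps0; rewrite add0e.
suff [δ δ0 Hδ] : exists2 δ : R, 0 < δ & forall u, ball v δ u ->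
    (lebesgue_d (Iset a b u `+` Iset a b v) <= eps%:E)%E.
  rewrite /limf_esup.
  apply: (@le_trans _ _ (ereal_sup ((fun u => lebesgue_d (Iset a b u `+` Iset a b v)) @` ball v δ))).
    apply: ereal_inf_lbound; exists (ball v δ) => //.
    by rewrite /dnbhs /within /=; apply: filterS (nbhsx_ballx v δ δ0) => y Hy _.
  by apply: ge_ereal_sup => _ [u Bu <-]; exact: Hδ.
pose C := 1 + d%:R * (`|a| + `|b|).
have C0 : 0 < C := @C_gt0 R d a b.
pose c := v 0 ord_max.
pose w := fun j : 'I_d => v 0 (widen_ord (leqnSn d) j).
have Hs : forall δ u, ball v δ u -> (lebesgue_d (Iset a b u `+` Iset a b v) <=
    iter_int (fun x : d.-tuple R => (\1_(slab a b c w (δ * C)) x)%:E))%E.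
  move=> δ u Bu; apply: iter_le => x; first by rewrite lee_fin indicE.
  rewrite lee_fin !indicE; case: (boolP (x \in _)) => //.
  by rewrite inE => /(@diff_in_slab R d a b u v δ x Bu) h; rewrite mem_set.
have [/existsP [j wj]|hn] := boolP [exists j, w j != 0].
  case: (@arg_maxnP _ j (fun k : 'I_d => w k != 0) (fun i : 'I_d => nat_of_ord i) wj) => i wi imax.
  have wz : forall k : 'I_d, (i < k)%N -> w k = 0.
    move=> k ik; apply/eqP; apply: contraTT ik => nz; rewrite -leqNgt; exact: imax.
  have M0 : 0 < b - a + 1 by lra.
  have wi0 : 0 < `|w i| by rewrite normr_gt0.
  exists (eps * `|w i| / (2 * C * (b - a + 1) ^+ d)).
    by rewrite divr_gt0 ?mulr_gt0 ?exprn_gt0.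
  move=> u Bu; move/le_trans: (Hs _ u Bu); apply.
  apply: le_trans (@slab_bound R a b (ltW ab) d c w _ i _ wi wz) _.
    by rewrite mulr_ge0 ?ltW ?divr_gt0 ?mulr_gt0 ?exprn_gt0.
  rewrite lee_fin le_eqVlt; apply/orP; left; apply/eqP.
  field.
  by rewrite !gt_eqF ?exprn_gt0.
have wz : forall j, w j = 0.
  move=> j; move: hn; rewrite negb_exists => /forallP /(_ j).
  by rewrite negbK => /eqP.
have c0 : c != 0.
  apply: contra v0 => /eqP c0; apply/eqP/matrixP => i k; rewrite (ord1 i) mxE.
  case: (unliftP ord_max k) => [j ->|->]; last exact: c0.
  have -> : lift ord_max j = widen_ord (leqnSn d) j by apply: val_inj; exact: lift_max.
  exact: wz.
have cpos : 0 < `|c| by rewrite normr_gt0.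
exists (`|c| / (2 * C)); first by rewrite divr_gt0 ?mulr_gt0.
move=> u Bu; move/le_trans: (Hs _ u Bu); apply.
rewrite (@iter_zero R d _ _) ?lee_fin ?ltW //.
move=> x; rewrite indicE memNset //= => -[_].
rewrite big1 ?addr0 => [|k _]; last by rewrite wz mul0r.
have -> : `|c| / (2 * C) * C = `|c| / 2 by field; rewrite gt_eqF.
move=> h; lra.
Qed.
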